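(* Let $q\equiv 3 \pmod 4$ be a prime power and let $P=\{(x,y,z)\in\mathbb{F}_q^3 : z=x^2+y^2\}$. There is an absolute constant $c>0$ such that for any $\lambda,\beta\in\mathbb{F}_q^*$ there exists a set $X\subset P$ with $|X|\ge c\,q^{5/3}$ containing no non-trivial $(\lambda,\beta)$-energy tuple.
   Context: Every point of $P$ is written as $x=(\underline{x},\underline{x}\cdot\underline{x})$ with $\underline{x}\in\mathbb{F}_q^2$, where $u\cdot v=u_1v_1+u_2v_2$. Four points $x,z,y,t\in\mathbb{F}_q^2$ form a rectangle (with vertices in the cyclic order $x,z,y,t$) if $(x-z)\cdot(y-z)=0$, $(z-y)\cdot(t-y)=0$, $(y-t)\cdot(x-t)=0$ and $(t-x)\cdot(z-x)=0$; the length of a side $uv$ is $(u-v)\cdot(u-v)$. A tuple $(a,b,c,d)\in P^4$ is a non-trivial energy tuple if $a+b=c+d$ and $a,b,c,d$ are pairwise distinct; it is a $(\lambda,\beta)$-energy tuple if moreover $\underline{a},\underline{c},\underline{b},\underline{d}$ form a rectangle with side-lengths $\lambda$ and $\beta$. *)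

(* Defs.v *)
From mathcomp Require Import all_boot all_order all_algebra all_field.
From Stdlib Require Import Reals.
Set Implicit Arguments. Unset Strict Implicit. Unset Printing Implicit Defensive.
Import GRing.Theory.
Local Open Scope ring_scope.

(* Points of F_q^2 are pairs (u1,u2); points of F_q^3 are ((x,y),z), so that
   for p : F*F*F, p.1 is the planar part "underline p" and p.2 the last coordinate. *)

Definition dot (F : fieldType) (u v : F * F) : F := u.1 * v.1 + u.2 * v.2.
Definition sub2 (F : fieldType) (u v : F * F) : F * F := (u.1 - v.1, u.2 - v.2).
Definition add3 (F : fieldType) (a b : F * F * F) : F * F * F :=
  ((a.1.1 + b.1.1, a.1.2 + b.1.2), a.2 + b.2).

Definition paraboloid (F : finFieldType) : {set F * F * F} :=
  [set p | p.2 == p.1.1 ^+ 2 + p.1.2 ^+ 2].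

Definition sidelen (F : fieldType) (u v : F * F) : F := dot (sub2 u v) (sub2 u v).

(* x, z, y, t form a rectangle with vertices in cyclic order x, z, y, t *)
Definition rectangle (F : fieldType) (x z y t : F * F) : Prop :=
  [/\ dot (sub2 x z) (sub2 y z) = 0, dot (sub2 z y) (sub2 t y) = 0,
      dot (sub2 y t) (sub2 x t) = 0 & dot (sub2 t x) (sub2 z x) = 0].

Definition rectangle_sides (F : fieldType) (lam bet : F) (x z y t : F * F) : Prop :=
  rectangle x z y t /\
  ((sidelen x z = lam /\ sidelen z y = bet /\ sidelen y t = lam /\ sidelen t x = bet) \/
   (sidelen x z = bet /\ sidelen z y = lam /\ sidelen y t = bet /\ sidelen t x = lam)).

Definition nontriv_energy (F : fieldType) (a b c d : F * F * F) : Prop :=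
  add3 a b = add3 c d /\
  (a <> b /\ a <> c /\ a <> d /\ b <> c /\ b <> d /\ c <> d).

Definition lb_energy (F : fieldType) (lam bet : F) (a b c d : F * F * F) : Prop :=
  nontriv_energy a b c d /\ rectangle_sides lam bet a.1 c.1 b.1 d.1.

(* Main.v *)
Require Import Defs.
From mathcomp Require Import all_boot all_order all_algebra all_field.
From Stdlib Require Import Reals.
From Stdlib Require Import Lra Lia Psatz.
From mathcomp Require Import zify ring.
From mathcomp Require Import ssrnat.
Set Implicit Arguments. Unset Strict Implicit. Unset Printing Implicit Defensive.
Import GRing.Theory.


Section Del.
Variable V : finType.
Variable k : nat.
Notation G := {ffun V -> 'I_k.+1}.
Definition Aset (g : G) : {set V} := [set v | g v == ord0].

Lemma card_fix (T : {set V}) :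
  #|[set g : G | T \subset Aset g]| = k.+1 ^ (#|V| - #|T|).
Proof.
pose F := fun v : V => if v \in T then pred1 (@ord0 k) else predT.
have -> : [set g : G | T \subset Aset g] = [set g : G | g \in finfun.family F].
  apply/setP => g; rewrite !inE; apply/subsetP/familyP => H v.
  - rewrite /F; case: ifP => // vT; by have := H v vT; rewrite inE.
  - move=> vT; rewrite inE; have := H v; rewrite /F vT; by [].
rewrite cardsE card_family foldrE big_map big_enum /=.
rewrite (bigID (mem T)) /=.
rewrite (eq_bigr (fun _ => 1)); last by move=> v vT; rewrite /F vT card1.
rewrite [X in _ * X](eq_bigr (fun _ => k.+1)); last first.
  by move=> v /negbTE vT; rewrite /F vT cardT /= size_enum_ord.
rewrite !prod_nat_const exp1n mul1n.
congr (_ ^ _).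
rewrite -(cardC T) addKn.
by apply: eq_card => v; rewrite !inE.
Qed.

Lemma sum_ind (T : finType) (P : pred T) :
  \sum_(x : T) (if P x then 1 else 0) = #|[set x | P x]|.
Proof. by rewrite -big_mkcond sum1_card cardsE. Qed.

Definition tset (e : V * V * V * V) : {set V} := [set e.1.1.1; e.1.1.2; e.1.2; e.2].

Lemma deletion (Bs : {set V * V * V * V}) :
  0 < #|V| -> (forall e, e \in Bs -> 4 <= #|tset e|) ->
  exists A : {set V}, #|V| * k.+1 ^ 3 <= k.+1 ^ 4 * #|A| + #|Bs| /\
    forall e, e \in Bs -> ~~ (tset e \subset A).
Proof.
move=> n0 H4.
set K := k.+1; set n := #|V|.
pose h (g : G) := #|[set e in Bs | tset e \subset Aset g]|.
have S1 : \sum_(g : G) #|Aset g| = n * K ^ (n - 1).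
  rewrite (eq_bigr (fun g => \sum_(v : V) (if v \in Aset g then 1 else 0))); last first.
    by move=> g _; rewrite sum_ind; apply: eq_card => v; rewrite !inE.
  rewrite exchange_big /=.
  rewrite (eq_bigr (fun v => K ^ (n - 1))); last first.
    move=> v _; rewrite sum_ind -(cards1 v) -card_fix; apply: eq_card => g.
    by rewrite !inE sub1set inE.
  by rewrite sum_nat_const; congr (_ * _); apply: eq_card.
have S2 : K ^ 4 * \sum_(g : G) h g <= #|Bs| * K ^ n.
  rewrite (eq_bigr (fun g => \sum_(e : V * V * V * V)
      (if (e \in Bs) && (tset e \subset Aset g) then 1 else 0))); last first.
    by move=> g _; rewrite sum_ind; apply: eq_card => e; rewrite !inE.
  rewrite exchange_big /= big_distrr /=.
  apply: (@leq_trans (\sum_(e : V * V * V * V) (if e \in Bs then K ^ n else 0))).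
    apply: leq_sum => e _; case: ifP => eB /=.
      rewrite sum_ind.
      have -> : #|[set x : G | true && (tset e \subset Aset x)]| = K ^ (n - #|tset e|).
        by rewrite -card_fix; apply: eq_card => g; rewrite !inE.
      have := H4 e eB; have : #|tset e| <= n by apply: max_card.
      move: #|tset e| => t tn t4.
      by rewrite -(subnKC tn) addKn expnD leq_mul2r; apply/orP; right; apply: leq_pexp2l.
    by rewrite big1 ?muln0.
  by rewrite -big_mkcond /= sum_nat_const.
have [g Hg] : exists g : G, K ^ 4 * h g + n * K ^ 3 <= K ^ 4 * #|Aset g| + #|Bs|.
  case: (boolP [exists g : G, K ^ 4 * h g + n * K ^ 3 <= K ^ 4 * #|Aset g| + #|Bs|]).
    by move/existsP.
  move/existsPn => H.
  have : \sum_(g : G) (K ^ 4 * #|Aset g| + #|Bs|).+1 <= \sum_(g : G) (K ^ 4 * h g + n * K ^ 3).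
    by apply: leq_sum => g _; rewrite ltnNge H.
  rewrite (eq_bigr (fun g => K ^ 4 * #|Aset g| + #|Bs|.+1)); last by move=> g _; rewrite addnS.
  have L1 : \sum_(g : G) (K ^ 4 * #|Aset g| + #|Bs|.+1)
      = K ^ 4 * \sum_(g : G) #|Aset g| + #|{ffun V -> 'I_k.+1}| * #|Bs|.+1.
    by rewrite big_split -big_distrr sum_nat_const.
  have R1 : \sum_(g : G) (K ^ 4 * h g + n * K ^ 3)
      = K ^ 4 * \sum_(g : G) h g + #|{ffun V -> 'I_k.+1}| * (n * K ^ 3).
    by rewrite big_split -big_distrr sum_nat_const.
  rewrite L1 R1 card_ffun card_ord -/n S1.
  have E : K ^ 4 * (n * K ^ (n - 1)) = n * K ^ 3 * K ^ n.
    rewrite mulnCA -mulnA -!expnD; congr (_ * _ ^ _); rewrite -/n; lia.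
  have Kn : 0 < K ^ n by rewrite expn_gt0.
  rewrite E.
  move: S2 Kn; move: (\sum_(g : G) h g) (K ^ n) (K ^ 4) (n * K ^ 3) => b Kn K4 nK3.
  nia.
pose D := [set e.1.1.1 | e in [set e in Bs | tset e \subset Aset g]].
exists (Aset g :\: D); split.
  have : #|Aset g| <= #|Aset g :\: D| + h g.
    rewrite cardsD; apply: (@leq_trans (#|Aset g :&: D| + (#|Aset g| - #|Aset g :&: D|))).
      by rewrite subnKC // subset_leq_card // subsetIl.
    rewrite addnC leq_add2l; apply: (leq_trans (subset_leq_card (subsetIr _ _))).
    exact: leq_imset_card.
  move: Hg; move: (h g) #|Aset g| #|Aset g :\: D| => x y z.
  nia.
move=> e eB; apply/negP => sub.
have e1 : e.1.1.1 \in tset e by rewrite !inE eqxx.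
have := subsetP sub _ e1; rewrite inE => /andP[/negP nD _]; apply: nD.
apply/imsetP; exists e => //; rewrite inE eB /=.
by apply: (subset_trans sub); apply: subsetDl.
Qed.
End Del.

Local Open Scope ring_scope.

Lemma card_pair_sum (T1 T2 : finType) (A : {set T1 * T2}) :
  #|A| = (\sum_(x : T1) #|[set y | (x, y) \in A]|)%N.
Proof.
rewrite -sum1_card big_mkcond.
transitivity (\sum_(p : T1 * T2) (if (p.1, p.2) \in A then 1 else 0))%N.
  by apply: eq_bigr => -[x y].
rewrite -(pair_big xpredT xpredT (fun x y => if (x, y) \in A then 1 else 0)%N) /=.
apply: eq_bigr => x _; by rewrite sum_ind.
Qed.


Lemma sq_card (F : finFieldType) (e : F) : (#|[set y : F | y ^+ 2 == e]| <= 2)%N.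
Proof.
case: (pickP [pred y : F | y ^+ 2 == e]) => [y0 Hy0 | none].
  apply: (@leq_trans #|[set y0; - y0]|).
    apply: subset_leq_card; apply/subsetP => y; rewrite !inE.
    by rewrite -(eqP Hy0) eqf_sqr.
  by rewrite cards2 ltnS leq_b1.
rewrite (_ : [set y | _] = set0) ?cards0 //.
by apply/setP => y; rewrite !inE; have := none y.
Qed.

Section Geo.
Variable F : finFieldType.
Variables lam bet : F.
Hypothesis lam0 : lam != 0.
Hypothesis bet0 : bet != 0.

Definition goodlen (s : F * F) := (dot s s == lam) || (dot s s == bet).
Definition Circ := [set s : F * F | goodlen s].
Definition Mset := [set st : (F * F) * (F * F) |
   [&& goodlen st.1, goodlen st.2 & dot st.1 st.2 == 0]].

Lemma card_sq2 (e1 e2 : F) : (#|[set y : F | (y ^+ 2 == e1) || (y ^+ 2 == e2)]| <= 4)%N.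
Proof.
apply: (@leq_trans #|[set y : F | y ^+ 2 == e1] :|: [set y : F | y ^+ 2 == e2]|).
  by apply: subset_leq_card; apply/subsetP => y; rewrite !inE.
apply: (leq_trans (leq_card_setU _ _)).
by rewrite (_ : 4 = 2 + 2)%N // leq_add ?sq_card.
Qed.

Lemma card_Circ : (#|Circ| <= 4 * #|F|)%N.
Proof.
rewrite card_pair_sum mulnC -sum_nat_const.
apply: leq_sum => x _.
apply: (leq_trans _ (card_sq2 (lam - x * x) (bet - x * x))).
apply: subset_leq_card; apply/subsetP => y; rewrite !inE /goodlen /dot /=.
case/orP => /eqP <-; apply/orP; [left | right]; apply/eqP; ring.
Qed.

Lemma goodlen_neq0 s : goodlen s -> dot s s != 0.
Proof. by case/orP => /eqP ->. Qed.

Lemma card_perp s : goodlen s ->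
  (#|[set t : F * F | goodlen t && (dot s t == GRing.zero)]| <= 4)%N.
Proof.
move=> gs; have N0 := goodlen_neq0 gs.
set N := dot s s in N0.
pose f := fun r : F => (- s.2 * r / N, s.1 * r / N).
apply: (@leq_trans #|f @: [set r : F | (r ^+ 2 == N * lam) || (r ^+ 2 == N * bet)]|); last first.
  exact: (leq_trans (leq_imset_card _ _) (card_sq2 _ _)).
apply: subset_leq_card; apply/subsetP => -[t1 t2]; rewrite !inE => /andP[gt /eqP st].
have key : (s.1 * t2 - s.2 * t1) ^+ 2 = N * dot (t1, t2) (t1, t2).
  have E : (s.1 * t2 - s.2 * t1) ^+ 2 + (s.1 * t1 + s.2 * t2) ^+ 2
      = N * dot (t1, t2) (t1, t2) by rewrite /N /dot /=; ring.
  move: E; rewrite /dot /= in st; rewrite st [0 ^+ 2]expr2 mul0r addr0 //.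
apply/imsetP; exists (s.1 * t2 - s.2 * t1).
  rewrite inE key; case/orP: gt => /eqP ->; by rewrite eqxx ?orbT.
move: st; rewrite /f /N /dot /= => st.
congr (_, _); apply: (@mulIf _ (s.1 * s.1 + s.2 * s.2)) => //;
  rewrite mulfVK //.
  - transitivity (- s.2 * (s.1 * t2 - s.2 * t1) + s.1 * (s.1 * t1 + s.2 * t2)); first ring.
    by rewrite st mulr0 addr0.
  - transitivity (s.1 * (s.1 * t2 - s.2 * t1) + s.2 * (s.1 * t1 + s.2 * t2)); first ring.
    by rewrite st mulr0 addr0.
Qed.

Lemma card_Mset : (#|Mset| <= 16 * #|F|)%N.
Proof.
rewrite card_pair_sum.
apply: (@leq_trans (\sum_(s : F * F) (if goodlen s then 4 else 0))%N).
  apply: leq_sum => s _; case: ifP => gs.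
    apply: (leq_trans _ (card_perp gs)); apply: subset_leq_card.
    by apply/subsetP => t; rewrite !inE /= => /and3P[_ -> ->].
  rewrite leqn0 cards_eq0; apply/eqP/setP => t; rewrite !inE /= gs //.
rewrite -big_mkcond /= sum_nat_const.
have := card_Circ; rewrite /Circ cardsE => H.
by rewrite mulnC (_ : 16 = 4 * 4)%N // -mulnA leq_mul2l H orbT.
Qed.

Definition badb (e : (F * F) * (F * F) * (F * F) * (F * F)) : bool :=
  let: (a, b, c, d) := e in
  [&& a != b, a != c, a != d, b != c, b != d, c != d,
      b == (c.1 + d.1 - a.1, c.2 + d.2 - a.2) &
      (sub2 c a, sub2 d a) \in Mset].

Definition Bset := [set e | badb e].

Definition fB (x : (F * F) * ((F * F) * (F * F))) : (F * F) * (F * F) * (F * F) * (F * F) :=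
  let: (a, (s, t)) := x in
  (a, (a.1 + s.1 + t.1, a.2 + s.2 + t.2), (a.1 + s.1, a.2 + s.2), (a.1 + t.1, a.2 + t.2)).

Lemma card_Bset : (#|Bset| <= #|F| * #|F| * (16 * #|F|))%N.
Proof.
apply: (@leq_trans #|fB @: setX [set: F * F] Mset|).
  apply: subset_leq_card; apply/subsetP => -[[[a b] c] d]; rewrite inE.
  case/and5P => _ _ _ _ /and4P[_ _ /eqP -> HM].
  apply/imsetP; exists (a, (sub2 c a, sub2 d a)); first by rewrite !inE /=; rewrite inE in HM.
  case: a {HM} => a1 a2; case: c => c1 c2; case: d => d1 d2.
  rewrite /fB /sub2 /=; congr (_, _, _, _); congr (_, _); ring.
apply: (leq_trans (leq_imset_card _ _)).
rewrite cardsX cardsT card_prod leq_mul2l card_Mset orbT //.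
Qed.

Lemma tset_Bset e : e \in Bset -> #|tset e| = 4%N.
Proof.
case: e => [[[a b] c] d]; rewrite inE /tset /= => /and5P[ab ac ad bc /and4P[bd cd _ _]].
have -> : [set a; b; c; d] = a |: (b |: (c |: [set d])).
  by apply/setP => x; rewrite !inE !orbA.
rewrite !cardsU1 cards1 !inE.
by rewrite (negbTE ab) (negbTE ac) (negbTE ad) (negbTE bc) (negbTE bd) (negbTE cd).
Qed.

Lemma sidelen_sym (u v : F * F) : sidelen u v = dot (sub2 v u) (sub2 v u).
Proof. by case: u => u1 u2; case: v => v1 v2; rewrite /sidelen /dot /sub2 /=; ring. Qed.

Lemma dot_sym (u v : F * F) : dot u v = dot v u.
Proof. by rewrite /dot mulrC [u.2 * _]mulrC. Qed.
End Geo.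

Section RealPart.
Local Open Scope R_scope.
Lemma real_part (Q K a : R) : 0 < Q -> 0 <= K -> 0 <= a ->
  Q * Q <= 2 * K * a -> K * K * K <= 256 * Q -> a >= / 14 * Rpower Q (5 / 3).
Proof.
intros HQ HK Ha H1 H2.
set y := Rpower Q (1 / 3).
set z := Rpower Q (5 / 3).
assert (Hy : 0 < y) by (unfold y, Rpower; apply exp_pos).
assert (Hz : 0 < z) by (unfold z, Rpower; apply exp_pos).
assert (Hy3 : y ^ 3 = Q).
{ unfold y. rewrite -Rpower_pow; last by (unfold Rpower; apply exp_pos).
  rewrite Rpower_mult. replace (1 / 3 * INR 3) with 1 by (simpl; lra).
  apply Rpower_1; auto. }
assert (Hzy : z * y = Q * Q).
{ unfold z, y. rewrite -Rpower_plus. replace (5 / 3 + 1 / 3) with (INR 2) by (simpl; lra).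
  rewrite Rpower_pow; last by auto. simpl; nra. }
assert (HKy : K <= 7 * y).
{ destruct (Rle_lt_dec K (7 * y)) as [h|h]; auto.
  exfalso.
  assert (h7 : 0 < 7 * y) by lra.
  assert (h2 : (7 * y) * (7 * y) < K * K) by nra.
  assert (h3 : (7 * y) * (7 * y) * (7 * y) < K * K * K) by nra.
  simpl in Hy3. nra. }
assert (z * y <= 14 * y * a) by nra.
assert (z <= 14 * a).
{ apply Rmult_le_reg_r with y; auto. nra. }
lra.
Qed.

End RealPart.

Lemma cube N : (0 < N)%N -> exists K, [/\ (0 < K)%N, (N <= K ^ 3)%N & (K ^ 3 <= 8 * N)%N].
Proof.
move=> N0.
have ex : exists K, (N <= K ^ 3)%N.
  by exists N; rewrite -{1}(expn1 N); apply: leq_pexp2l.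
case: (ex_minnP ex) => K HK Hmin; exists K; split => //.
- rewrite lt0n; apply/negP => /eqP K0; move: HK; rewrite K0 exp0n // leqn0 => /eqP N00.
  by rewrite N00 in N0.
- case: (leqP K 1) => K1.
    apply: (@leq_trans 1); last by rewrite muln_gt0 N0.
    by rewrite -(exp1n 3) leq_exp2r.
  have lt : ((K.-1) ^ 3 < N)%N.
    rewrite ltnNge; apply/negP => H; have := Hmin _ H; lia.
  apply: (@leq_trans ((2 * K.-1) ^ 3)).
    rewrite leq_exp2r //; lia.
  rewrite expnMn; rewrite (_ : 2 ^ 3 = 8)%N // leq_mul2l /=; exact: ltnW.
Qed.

Local Open Scope ring_scope.

Theorem proposition1p5 :
  exists c : R, (0 < c)%R /\
    forall (F : finFieldType), modn #|F| 4 = 3%nat ->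
    forall lam bet : F, lam != 0 -> bet != 0 ->
    exists X : {set F * F * F},
      X \subset paraboloid F /\
      (INR #|X| >= c * Rpower (INR #|F|) (5 / 3))%R /\
      (forall a b c' d, a \in X -> b \in X -> c' \in X -> d \in X ->
         ~ lb_energy lam bet a b c' d).
Proof.
exists (/ 14)%R; split; first by apply: Rinv_0_lt_compat; lra.
move=> F _ lam bet lam0 bet0.
set q := #|F|.
have q0 : (0 < q)%N by apply/card_gt0P; exists 0.
have [K [K0 K1 K2]] : exists K, [/\ (0 < K)%N, (32 * q <= K ^ 3)%N & (K ^ 3 <= 256 * q)%N].
  have := @cube (32 * q)%N; rewrite muln_gt0 q0 => /(_ isT) [K [K0 K1 K2]].
  by exists K; split => //; rewrite (_ : 256 = 8 * 32)%N // -mulnA.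
have n0 : (0 < #|{: F * F}|)%N by rewrite card_prod muln_gt0 q0.
have t4 : forall e, e \in Bset lam bet -> (4 <= #|tset e|)%N.
  by move=> e eB; rewrite (tset_Bset eB).
have [A [HA HB]] := @deletion _ K.-1 (Bset lam bet) n0 t4.
rewrite prednK // card_prod -/q in HA.
have HBs := card_Bset lam0 bet0; rewrite -/q in HBs.
have main : (q * q <= 2 * K * #|A|)%N.
  have h1 : (2 * (q * q * (16 * q)) <= q * q * K ^ 3)%N.
    by rewrite mulnCA leq_mul2l mulnA (_ : 2 * 16 = 32)%N // K1 orbT.
  have h2 : (2 * (q * q * K ^ 3) <= 2 * (K ^ 4 * #|A|) + q * q * K ^ 3)%N.
    move: HA HBs h1; move: (q * q * K ^ 3)%N (K ^ 4 * #|A|)%N #|Bset lam bet| (q * q * (16 * q))%N.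
    move=> x y z w; lia.
  have h3 : (q * q * K ^ 3 <= 2 * (K ^ 4 * #|A|))%N by lia.
  have K3 : (0 < K ^ 3)%N by rewrite expn_gt0 K0.
  rewrite -(leq_pmul2r K3); apply: (leq_trans h3).
  by rewrite (_ : K ^ 4 = K * K ^ 3)%N // mulnA mulnA mulnAC.
pose X := [set (v, v.1 ^+ 2 + v.2 ^+ 2) | v in A].
have cX : #|X| = #|A|.
  by apply: card_imset => v w [].
exists X; split; [|split].
- by apply/subsetP => p /imsetP[v _ ->]; rewrite inE.
- rewrite cX.
  have K3' : (K * K * K <= 256 * q)%N by move: K2; rewrite (_ : K ^ 3 = K * K * K)%N // !expnS expn0 muln1 mulnA.
  apply: real_part.
  + apply: lt_0_INR; apply/ltP; exact: q0.
  + exact: pos_INR.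
  + exact: pos_INR.
  + rewrite (_ : 2%R = INR 2); last by rewrite INR_IZR_INZ.
    rewrite -!mult_INR; apply: le_INR; apply/leP; rewrite !multE; exact: main.
  + rewrite (_ : 256%R = INR 256); last by rewrite INR_IZR_INZ.
    rewrite -!mult_INR; apply: le_INR; apply/leP; rewrite !multE; exact: K3'.
- move=> a b c' d /imsetP[[a1 a2] aA ->] /imsetP[[b1 b2] bA ->]
    /imsetP[[c1 c2] cA ->] /imsetP[[d1 d2] dA ->].
  rewrite /lb_energy /nontriv_energy /rectangle_sides /rectangle /=.
  case=> [[Hadd [ab [ac [ad [bc [bd cd]]]]]] [[_ _ _ H4] Hs]].
  move: Hadd; rewrite /add3 /= => -[E1 E2 _].
  set e := ((a1, a2), (b1, b2), (c1, c2), (d1, d2)).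
  have ne : forall u v : F * F, (u, u.1 ^+ 2 + u.2 ^+ 2) <> (v, v.1 ^+ 2 + v.2 ^+ 2) -> u != v.
    by move=> u v H; apply/eqP => E; apply: H; rewrite E.
  have eB : e \in Bset lam bet.
    rewrite inE /badb /=.
    rewrite (ne _ _ ab) (ne _ _ ac) (ne _ _ ad) (ne _ _ bc) (ne _ _ bd) (ne _ _ cd) /=.
    apply/andP; split.
      by apply/eqP; congr (_, _); [rewrite -E1 | rewrite -E2]; ring.
    rewrite inE /= /goodlen; apply/and3P; split.
    + by case: Hs => [[H1 _]|[H1 _]]; rewrite sidelen_sym in H1; rewrite H1 eqxx ?orbT.
    + by case: Hs => [[_ [_ [_ H1]]]|[_ [_ [_ H1]]]]; rewrite /sidelen in H1; rewrite H1 eqxx ?orbT.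
    + by rewrite dot_sym H4.
  have sub : tset e \subset A.
    by apply/subsetP => x; rewrite !inE => /orP[/orP[/orP[]|]|] /eqP ->.
  by move/negP: (HB e eB).
Qed.
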